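(* Consider an $n$-player team problem with common cost $c$ satisfying Assumptions A1, A4 and A5. Let $\{\mu_m\}$ and $\mu$ be information structures satisfying Assumption A3 with $\mu_m\to\mu$ setwise. Then the team value function is upper semicontinuous along this sequence: $$\limsup_{m\to\infty}J^*(c,\mu_m)\le J^*(c,\mu).$$
   Context: $\mathbb{X},\mathbb{Y}^1,\dots,\mathbb{Y}^n$ are standard Borel spaces. An information structure is a probability measure $\mu$ on $\mathbb{X}\times\mathbb{Y}^1\times\cdots\times\mathbb{Y}^n$; its $\mathbb{X}$-marginal $\zeta$ is the prior. A team problem consists of standard Borel action spaces $\mathbb{U}^i$ and a common measurable cost $c:\mathbb{X}\times\mathbb{U}^1\times\cdots\times\mathbb{U}^n\to\mathbb{R}$; for a team policy $\bar\gamma=(\gamma^1,\dots,\gamma^n)$ with measurable $\gamma^i:\mathbb{Y}^i\to\mathbb{U}^i$, $J(c,\mu,\bar\gamma)=\int c(x,\gamma^1(y^1),\dots,\gamma^n(y^n))\,d\mu$, and $J^*(c,\mu)=\inf_{\bar\gamma}J(c,\mu,\bar\gamma)$. Setwise convergence: $\mu_m(A)\to\mu(A)$ for every Borel set $A$. Assumptions: A1: the cost is measurable and bounded. A3: $\mu\ll\zeta(dx)\bar Q^1(dy^1)\cdots\bar Q^n(dy^n)$ for some probability measures $\bar Q^i$ on $\mathbb{Y}^i$. A4: each action space is compact. A5: the bounded measurable cost is continuous in the players' actions for each fixed $x$, and each action space is compact. *)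

(* Defs.v *)
From HB Require Import structures.
From mathcomp Require Import all_boot all_order all_algebra.
From mathcomp Require Import all_classical all_reals all_analysis.
Set Implicit Arguments. Unset Strict Implicit. Unset Printing Implicit Defensive.
Import Order.TTheory GRing.Theory Num.Theory.
Import numFieldNormedType.Exports.
Local Open Scope classical_set_scope.
Local Open Scope ring_scope.

Definition metric_open (R : realType) (T : Type) (dist : T -> T -> R) (A : set T) :=
  forall x, A x -> exists2 e : R, 0 < e & forall y, dist x y < e -> A y.

(* T is standard Borel: its sigma-algebra is the Borel sigma-algebra of a
   Polish (separable, completely metrizable) topology on T. *)
Definition standard_borel (R : realType) (d : measure_display) (T : measurableType d) :=
  exists dist : T -> T -> R,
    [/\
        ((forall x y, dist x y = 0 <-> x = y) /\
         (forall x y, dist x y = dist y x) /\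
         (forall x y z, dist x z <= dist x y + dist y z)),
        (forall u : nat -> T,
           (forall e : R, 0 < e -> exists N, forall k l, (N <= k)%N -> (N <= l)%N ->
              dist (u k) (u l) < e) ->
           exists a, forall e : R, 0 < e -> exists N, forall k, (N <= k)%N -> dist (u k) a < e),
        (exists D : set T, countable D /\
           forall x (e : R), 0 < e -> exists2 y, D y & dist x y < e) &
        (forall A : set T, measurable A <-> <<s metric_open dist >> A) ].

Section PiMeasurable.
Context (n : nat) (d : 'I_n -> measure_display) (M : forall i, measurableType (d i)).

Definition pi_cylinders : set (set (forall i, M i)) :=
  [set A | exists i (B : set (M i)), measurable B /\ A = (fun f => f i) @^-1` B].

End PiMeasurable.

Arguments pi_cylinders {n d} M.

Definition piMeas (n : nat) (d : 'I_n -> measure_display)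
  (M : forall i, measurableType (d i)) : Type := g_sigma_algebraType (pi_cylinders M).

Definition borelOf (T : ptopologicalType) := g_sigma_algebraType (@open T).

Section Team.
Context (R : realType) (n : nat) (dX : measure_display) (X : measurableType dX)
  (dY : 'I_n -> measure_display) (Y : forall i, measurableType (dY i))
  (U : 'I_n -> pseudoPMetricType R).

Definition action_meas : Type := piMeas (fun i => borelOf (U i)).

Definition team_policy (g : forall i, Y i -> U i) : Prop :=
  forall i, measurable_fun [set: Y i] (g i : Y i -> borelOf (U i)).

Definition team_cost (c : X -> (forall i, U i) -> R)
  (mu : probability (X * piMeas Y)%type R) (g : forall i, Y i -> U i) : \bar R :=
  (\int[mu]_p (c p.1 (fun i => g i (p.2 i)))%:E)%E.

Definition team_value (c : X -> (forall i, U i) -> R)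
  (mu : probability (X * piMeas Y)%type R) : \bar R :=
  ereal_inf [set team_cost c mu g | g in team_policy].

Definition assumption_A1 (c : X -> (forall i, U i) -> R) : Prop :=
  measurable_fun [set: (X * action_meas)%type] (fun p : (X * action_meas)%type => c p.1 p.2)
  /\ exists K : R, forall x u, `|c x u| <= K.

(* A3: mu << zeta (x) Qbar^1 (x) ... (x) Qbar^n, where zeta is the X-marginal of mu;
   the product measure is the measure on X x Y^1 x ... x Y^n that agrees with
   zeta(A0) * prod_i Qbar^i(A_i) on measurable rectangles *)
Definition assumption_A3 (mu : probability (X * piMeas Y)%type R) : Prop :=
  exists (Q : forall i, probability (Y i) R)
         (P : {measure set (X * piMeas Y)%type -> \bar R}),
    (forall (A0 : set X) (A : forall i, set (Y i)),
        measurable A0 -> (forall i, measurable (A i)) ->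
        P (A0 `*` [set y : piMeas Y | forall i, A i (y i)]) =
        (mu (A0 `*` [set: piMeas Y]) * (\prod_(i < n) fine (Q i (A i)))%:E)%E)
    /\ mu `<< P.

Definition assumption_A4 : Prop := forall i, compact [set: U i].

Definition assumption_A5 (c : X -> (forall i, U i) -> R) : Prop :=
  [/\ assumption_A1 c,
      (forall x, continuous (fun u : prod_topology (fun i => U i : topologicalType) => c x u))
    & assumption_A4].

Definition setwise_cvg (mu_ : nat -> probability (X * piMeas Y)%type R)
  (mu : probability (X * piMeas Y)%type R) : Prop :=
  forall A : set (X * piMeas Y)%type, measurable A -> mu_ m A @[m --> \oo] --> mu A.

End Team.

(* Main.v *)
Require Import Defs.
From HB Require Import structures.
From mathcomp Require Import all_boot all_order all_algebra.
From mathcomp Require Import all_classical all_reals all_analysis.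
From mathcomp Require Import measurable_realfun lra.
Import Order.TTheory GRing.Theory Num.Theory.
Import numFieldNormedType.Exports.
Local Open Scope classical_set_scope.
Local Open Scope ring_scope.

Section Approx.
Context (d : measure_display) (T : measurableType d) (R : realType).

Lemma bdd_integrable (P : probability T R) (f : T -> R) (K : R) :
  measurable_fun setT f -> (forall x, `|f x| <= K) ->
  P.-integrable setT (EFin \o f).
Proof.
move=> mf fK; apply/integrableP; split; first exact/measurable_EFinP.
apply: (@le_lt_trans _ _ (\int[P]_x (cst `|K|%:E x))%E).
  apply: ge0_le_integral => //.
  - apply: measurableT_comp => //; exact/measurable_EFinP.
  - by move=> x _ /=; rewrite lee_fin; exact: (le_trans (fK x) (ler_norm K)).
rewrite integral_cst //. rewrite [X in (_ * X)%E](_ : _ = 1%E); last exact: probability_setT.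
by rewrite mule1 ltry.
Qed.


Lemma approx (f : T -> R) (K eps : R) : measurable_fun setT f ->
  (forall x, `|f x| <= K) -> 0 < eps ->
  exists M (a : 'I_M -> R) (A : 'I_M -> set T), (forall k, measurable (A k)) /\
  forall P : probability T R,
    `| fine (\int[P]_x (f x)%:E) - \sum_(k < M) a k * fine (P (A k)) | <= eps.
Proof.
move=> mf fK e0.
pose g x := (f x + K) * eps^-1.
have mg : measurable_fun setT g.
  apply: measurable_funM; last exact: measurable_cst.
  by apply: measurable_funD => //; exact: measurable_cst.
have fK' x : - K <= f x <= K by rewrite -ler_norml.
have g0 x : 0 <= g x.
  rewrite /g mulr_ge0 ?invr_ge0 ?(ltW e0) //.
  by have /andP[h _] := fK' x; lra.
have gM x : g x <= (K + K) * eps^-1.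
  rewrite /g ler_pM2r ?invr_gt0 //.
  by have /andP[_ h] := fK' x; lra.
pose M := (Num.truncn ((K + K) * eps^-1)).+1.
pose idx x := Num.truncn (g x).
have idxM x : (idx x < M)%N by rewrite ltnS le_truncn.
pose A (k : 'I_M) := g @^-1` [set` (`[k%:R, k.+1%:R[ : interval R)%R].
have mA k : measurable (A k).
  by rewrite -[A k]setTI; apply: mg => //; exact: measurable_itv.
have Ak x (k : 'I_M) : A k x <-> idx x = k.
  rewrite /A /= in_itv /=; split.
    by move=> h; apply/eqP; rewrite truncn_eq.
  by move=> <-; rewrite -truncn_eq.
pose a (k : 'I_M) := k%:R * eps - K.
exists M, a, A; split => // P.
pose s x := \sum_(k < M) a k * \1_(A k) x.
have sE x : s x = a (Ordinal (idxM x)).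
  rewrite /s (bigD1 (Ordinal (idxM x))) //= big1 ?addr0.
    by rewrite indicE mem_set ?mulr1 //; apply/Ak.
  move=> j hj; rewrite indicE memNset ?mulr0 // => /Ak h.
  by move: hj; rewrite -(inj_eq val_inj) /= h eqxx.
have fs x : `|f x - s x| <= eps.
  rewrite sE /a /=.
  have := truncn_itv (g0 x); rewrite -/(idx x) -natr1.
  have : f x = g x * eps - K by rewrite /g -mulrA mulVf ?mulr1 ?addrK // gt_eqF.
  move: (idx x)%:R (g x) => n y -> /andP[h1 h2].
  rewrite ler_norml; apply/andP; split; nra.
have ms : measurable_fun setT s.
  apply: measurable_sum => k; apply: measurable_funM; first exact: measurable_cst.
  exact: measurable_indic.
have sK x : `|s x| <= K + eps.
  have := fs x; have := fK' x; rewrite ler_norml ler_norml => /andP[h1 h2] /andP[h3 h4].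
  apply/andP; split; lra.
have is_ := @bdd_integrable P s (K + eps) ms sK.
have if_ := @bdd_integrable P f K mf fK.
have Is : (\int[P]_x (s x)%:E = (\sum_(k < M) a k * fine (P (A k)))%:E)%E.
  under eq_integral => x _ do rewrite /s -sumEFin.
  rewrite integral_sum //; last first.
    move=> k; apply: (@bdd_integrable P (fun x => a k * \1_(A k) x) `|a k|).
      apply: measurable_funM; first exact: measurable_cst.
      exact: measurable_indic.
    move=> x; rewrite normrM indicE; case: (x \in A k) => /=.
      by rewrite normr1 mulr1.
    by rewrite normr0 mulr0.
  rewrite -sumEFin; apply: eq_bigr => k _.
  under eq_integral => x _ do rewrite EFinM.
  rewrite integralZl //; last exact: integrable_indic.
  by rewrite integral_indic // setIT EFinM fineK // fin_num_measure.
have H : (`| \int[P]_x (f x)%:E - \int[P]_x (s x)%:E | <= eps%:E)%E.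
  rewrite -integralB_EFin //.
  under eq_integral => x _ do rewrite -EFinB.
  apply: le_trans (le_abse_integral _ _ _) _ => //.
    apply/measurable_EFinP; exact: measurable_funB.
  apply: (@le_trans _ _ (\int[P]_x (cst eps%:E x))%E).
    apply: ge0_le_integral => //.
    - apply: measurableT_comp => //; apply/measurable_EFinP; exact: measurable_funB.
    - by move=> x _ /=; rewrite lee_fin.
  rewrite integral_cst // [X in (_ * X)%E](_ : _ = 1%E); last exact: probability_setT.
  by rewrite mule1.
move: H; rewrite -[X in (`| X - _ |)%E](fineK (integrable_fin_num _ if_)) //.
by rewrite Is -EFinB abse_EFin lee_fin.
Qed.


Lemma tri3 (x y u v e : R) : `|x - u| <= e / 3 -> `|y - v| <= e / 3 ->
  `|v - u| <= e / 3 -> `|y - x| <= e.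
Proof.
rewrite !ler_norml => /andP[? ?] /andP[? ?] /andP[? ?].
apply/andP; split; lra.
Qed.

Lemma setwise_int (mu_ : nat -> probability T R) (mu : probability T R)
  (f : T -> R) (K : R) :
  (forall A, measurable A -> mu_ m A @[m --> \oo] --> mu A) ->
  measurable_fun setT f -> (forall x, `|f x| <= K) ->
  (\int[mu_ m]_x (f x)%:E)%E @[m --> \oo] --> (\int[mu]_x (f x)%:E)%E.
Proof.
move=> hs mf fK.
have fin (P : probability T R) : (\int[P]_x (f x)%:E)%E \is a fin_num.
  exact: integrable_fin_num (@bdd_integrable P f K mf fK).
rewrite -(fineK (fin mu)); apply/fine_cvgP; split; first exact: nearW.
apply/cvgrPdist_le => e e0.
have e30 : 0 < e / 3 by rewrite divr_gt0.
have [M [a [A [mA hA]]]] := @approx f K (e / 3) mf fK e30.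
have cv : (\sum_(k < M) a k * fine (mu_ m (A k))) @[m --> \oo] -->
          \sum_(k < M) a k * fine (mu (A k)).
  apply: (@cvg_big _ _ +%R 0 xpredT add_continuous) => k _.
  apply: cvgMl_tmp; apply: fine_cvg; rewrite fineK; first exact: hs.
  exact: fin_num_measure.
move/cvgrPdist_le: cv => /(_ _ e30) cv.
near=> m.
apply: tri3 (hA (mu_ m)) (hA mu) _.
by near: m.
Unshelve. all: by end_near.
Qed.

End Approx.

Lemma limn_esup_le (R : realType) (u v : (\bar R)^nat) :
  (forall m, (u m <= v m)%E) -> (limn_esup u <= limn_esup v)%E.
Proof.
move=> uv; rewrite !limn_esup_lim; apply: lee_lim; [exact: is_cvg_esups|exact: is_cvg_esups|].
apply: nearW => k /=; apply: ge_ereal_sup => _ [j hj <-].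
apply: le_trans (uv j) _; apply: ereal_sup_ubound; by exists j.
Qed.

Lemma proj_meas (n : nat) (d : 'I_n -> measure_display)
  (M : forall i, measurableType (d i)) (i : 'I_n) :
  measurable_fun setT (fun f : piMeas M => f i).
Proof. move=> _ B mB; rewrite setTI; apply: sub_gen_smallest; by exists i, B. Qed.

Theorem theorem4p4 (R : realType) (n : nat)
  (dX : measure_display) (X : measurableType dX)
  (dY : 'I_n -> measure_display) (Y : forall i, measurableType (dY i))
  (U : 'I_n -> pseudoPMetricType R)
  (c : X -> (forall i, U i) -> R)
  (mu_ : nat -> probability (X * piMeas Y)%type R)
  (mu : probability (X * piMeas Y)%type R) :
  standard_borel R X ->
  (forall i, standard_borel R (Y i)) ->
  (forall i, hausdorff_space (U i)) ->
  assumption_A1 c -> assumption_A4 U -> assumption_A5 c ->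
  (forall m, assumption_A3 (mu_ m)) -> assumption_A3 mu ->
  setwise_cvg mu_ mu ->
  (limn_esup (fun m => team_value c (mu_ m)) <= team_value c mu)%E.
Proof.
move=> _ _ _ [mc [K cK]] _ _ _ _ hs.
apply: le_ereal_inf_tmp => _ [g pg <-].
have mh : measurable_fun setT
    (fun p : (X * piMeas Y)%type => c p.1 (fun i => g i (p.2 i))).
  pose h := fun p : (X * piMeas Y)%type =>
    (p.1, (fun i => g i (p.2 i)) : action_meas U).
  have -> : (fun p : (X * piMeas Y)%type => c p.1 (fun i => g i (p.2 i))) =
    (fun q : (X * action_meas U)%type => c q.1 q.2) \o h by [].
  apply: measurableT_comp; first exact: mc.
  apply: measurable_fun_pair; first exact: measurable_fst.
  apply: measurability; first by [].
  move=> _ [_ [i [B' [mB' ->]]] <-].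
  have mm : measurable_fun setT
      (fun p : (X * piMeas Y)%type => (g i (p.2 i) : borelOf (U i))).
    apply: (measurableT_comp (pg i)).
    have H := measurableT_comp (@proj_meas n dY Y i) measurable_snd.
    exact: H.
  exact: mm measurableT B' mB'.
have hc p : `|c p.1 (fun i => g i (p.2 i))| <= K by apply: cK.
have cv := @setwise_int _ _ _ mu_ mu _ K hs mh hc.
rewrite /team_cost -(cvg_limn_einf_sup cv).2.
apply: limn_esup_le => m; apply: ereal_inf_lbound; by exists g.
Qed.
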